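(* Let $K\subset\mathbb{R}^n$ be a proper cone. (i) If $\emptyset\ne\mathcal{M}\subset\pi(K)$, then the convex hull $\operatorname{conv}\mathcal{M}$ contains a $K$-irreducible element if and only if for every nontrivial face $F$ of $K$ there exists $A\in\mathcal{M}$ such that $AF\not\subset F$. (ii) If $\emptyset\ne\mathcal{M}\subset\pi(K)+\Lambda$ is bounded, where $\Lambda=\{\lambda I:\lambda\in\mathbb{R}\}$, then $\operatorname{conv}\mathcal{M}$ contains an irreducible exponentially $K$-nonnegative element (i.e. an element $A$ for which no nontrivial face $F$ of $K$ has $A\,\operatorname{span}F\subset\operatorname{span}F$) if and only if for every nontrivial face $F$ of $K$ there exists $A\in\mathcal{M}$ such that $A\,\operatorname{span}F\not\subset\operatorname{span}F$.
   Context: A proper cone $K\subset\mathbb{R}^n$ is a nonempty set with $rK\subset K$ for all $r>0$ which is convex, pointed ($K\cap(-K)=\{0\}$), closed and has nonempty interior. Write $x\ge_K y$ if $x-y\in K$. A face of $K$ is a cone $F\subseteq K$ such that $x\in F$ and $x\ge_K y\ge_K 0$ imply $y\in F$; the faces $\{0\}$ and $K$ are trivial. $\pi(K)=\{A\in\mathbb{R}^{n\times n}: AK\subset K\}$; $A\in\pi(K)$ is $K$-irreducible if there is no nontrivial face $F$ of $K$ with $AF\subset F$. A matrix $A$ is exponentially $K$-nonnegative if $e^{At}K\subset K$ for all $t\ge0$ (every element of $\pi(K)+\Lambda$ has this property). *)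

(* Defs.v *)
From mathcomp Require Import all_boot.
From Stdlib Require Import Reals.

Set Implicit Arguments.
Unset Strict Implicit.

Local Open Scope R_scope.

Definition vec (n : nat) := 'I_n -> R.
Definition mat (n : nat) := 'I_n -> 'I_n -> R.

Definition vzero {n} : vec n := fun _ => 0.
Definition vscale {n} (r : R) (x : vec n) : vec n := fun i => r * x i.
Definition vadd {n} (x y : vec n) : vec n := fun i => x i + y i.
Definition vsub {n} (x y : vec n) : vec n := fun i => x i - y i.
Definition vopp {n} (x : vec n) : vec n := fun i => - x i.
Definition vsum {n m} (f : 'I_m -> vec n) : vec n :=
  fun i => \big[Rplus/0]_(k < m) f k i.

Definition mv {n} (A : mat n) (x : vec n) : vec n :=
  fun i => \big[Rplus/0]_(j < n) (A i j * x j).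

Definition is_cone {n} (K : vec n -> Prop) : Prop :=
  (exists x, K x) /\ (forall r x, 0 < r -> K x -> K (vscale r x)).

Definition convex_set {n} (K : vec n -> Prop) : Prop :=
  forall x y t, K x -> K y -> 0 <= t -> t <= 1 ->
    K (vadd (vscale t x) (vscale (1 - t) y)).

Definition pointed {n} (K : vec n -> Prop) : Prop :=
  forall x, K x -> K (vopp x) -> x = vzero.

Definition closed_set {n} (K : vec n -> Prop) : Prop :=
  forall x, (forall eps, 0 < eps -> exists y, K y /\ forall i, Rabs (x i - y i) < eps) -> K x.

Definition nonempty_interior {n} (K : vec n -> Prop) : Prop :=
  exists x eps, 0 < eps /\ forall y, (forall i, Rabs (y i - x i) < eps) -> K y.

Definition proper_cone {n} (K : vec n -> Prop) : Prop :=
  is_cone K /\ convex_set K /\ pointed K /\ closed_set K /\ nonempty_interior K.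

Definition coneLe {n} (K : vec n -> Prop) (x y : vec n) : Prop := K (vsub x y).

Definition is_face {n} (K F : vec n -> Prop) : Prop :=
  is_cone F /\ convex_set F /\ (forall x, F x -> K x) /\
  (forall x y, F x -> coneLe K x y -> coneLe K y vzero -> F y).

Definition nontrivial_face {n} (K F : vec n -> Prop) : Prop :=
  is_face K F /\ ~ (forall x, F x <-> x = vzero) /\ ~ (forall x, F x <-> K x).

Definition maps_into {n} (A : mat n) (S : vec n -> Prop) : Prop :=
  forall x, S x -> S (mv A x).

Definition piK {n} (K : vec n -> Prop) (A : mat n) : Prop := maps_into A K.

Definition K_irreducible {n} (K : vec n -> Prop) (A : mat n) : Prop :=
  piK K A /\ ~ (exists F, nontrivial_face K F /\ maps_into A F).

Definition span {n} (F : vec n -> Prop) (x : vec n) : Prop :=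
  exists m (c : 'I_m -> R) (v : 'I_m -> vec n),
    (forall k, F (v k)) /\ x = vsum (fun k => vscale (c k) (v k)).

Definition conv {n} (M : mat n -> Prop) (A : mat n) : Prop :=
  exists m (w : 'I_m -> R) (B : 'I_m -> mat n),
    (forall k, 0 <= w k) /\ \big[Rplus/0]_(k < m) w k = 1 /\
    (forall k, M (B k)) /\
    A = (fun i j => \big[Rplus/0]_(k < m) (w k * B k i j)).

Definition piK_plus_Lambda {n} (K : vec n -> Prop) (A : mat n) : Prop :=
  exists (B : mat n) (lam : R), piK K B /\
    A = (fun i j => B i j + (if i == j then lam else 0)).

Definition bounded_set {n} (M : mat n -> Prop) : Prop :=
  exists C, forall A, M A -> forall i j, Rabs (A i j) <= C.

Definition is_expAt {n} (A : mat n) (t : R) (x y : vec n) : Prop :=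
  forall i, Un_cv (fun N => sum_f_R0
      (fun k => t ^ k / INR (Factorial.fact k) * iter k (mv A) x i) N) (y i).

Definition exp_K_nonneg {n} (K : vec n -> Prop) (A : mat n) : Prop :=
  forall t x y, 0 <= t -> K x -> is_expAt A t x y -> K y.

Definition irreducible_exp_K_nonneg {n} (K : vec n -> Prop) (A : mat n) : Prop :=
  exp_K_nonneg K A /\ ~ (exists F, nontrivial_face K F /\ maps_into A (span F)).

(* Main.v *)
Require Import Defs.
From mathcomp Require Import all_boot all_algebra.
From mathcomp Require Import Rstruct zify.
From Coquelicot Require Import Coquelicot.
From Stdlib Require Import Reals Lra FunctionalExtensionality Classical ClassicalEpsilon.
Require Import Defs.
Set Implicit Arguments. Unset Strict Implicit.
Import GRing.Theory.
Local Open Scope R_scope.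

Section Basic.
Variable n : nat.

Lemma vext (x y : vec n) : (forall i, x i = y i) -> x = y.
Proof. intros; apply functional_extensionality; auto. Qed.

Definition addcl (G : vec n -> Prop) := G vzero /\ forall x y, G x -> G y -> G (vadd x y).

Lemma vsum_cl G m (f : 'I_m -> vec n) : addcl G -> (forall k, G (f k)) -> G (vsum f).
Proof.
move=> [G0 GD]; elim: m f => [|m IH] f Hf.
- have -> : vsum f = vzero by apply: vext => i; rewrite /vsum big_ord0.
  done.
- have -> : vsum f = vadd (vsum (fun k => f (widen_ord (leqnSn m) k))) (f ord_max).
    by apply: vext => i; rewrite /vsum /vadd big_ord_recr.
  by apply: GD; [apply: IH => k; apply: Hf | apply: Hf].
Qed.

Lemma sum_ge0 m (P : pred 'I_m) (f : 'I_m -> R) : (forall k, 0 <= f k) ->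
  0 <= \big[Rplus/0]_(k < m | P k) f k.
Proof.
move=> H; apply: (big_ind (fun v => 0 <= v)) => //; [lra | move=> a b; lra].
Qed.

Definition norm1 (x : vec n) := \big[Rplus/0]_(i < n) Rabs (x i).

Lemma norm1_ge x i : Rabs (x i) <= norm1 x.
Proof.
rewrite /norm1 (bigD1 i) //=.
match goal with |- context [\big[Rplus/0]_(j < n | @?P j) @?f j] =>
  have := @sum_ge0 n P f (fun j => Rabs_pos _) end.
move=> H; set S := \big[Rplus/0]_(_ < n | _) _ in H *. simpl; lra.
Qed.

Lemma norm1_ge0 x : 0 <= norm1 x.
Proof. rewrite /norm1; apply: sum_ge0 => j; exact: Rabs_pos. Qed.

Lemma cone_zero (K : vec n -> Prop) : is_cone K -> closed_set K -> K vzero.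
Proof.
move=> [[x Kx] Ks] Kc; apply: Kc => eps Heps.
have Hn := norm1_ge0 x.
set r := eps / (1 + norm1 x).
have Hr : 0 < r by rewrite /r; apply Rdiv_lt_0_compat; lra.
have Hre : r * (1 + norm1 x) = eps by rewrite /r; field; lra.
exists (vscale r x); split; first by apply Ks.
move=> i; rewrite /vzero /vscale.
rewrite Rminus_0_l Rabs_Ropp Rabs_mult (Rabs_pos_eq r); last lra.
have := norm1_ge x i. nra.
Qed.

Lemma cc_add (G : vec n -> Prop) : is_cone G -> convex_set G -> forall x y, G x -> G y -> G (vadd x y).
Proof.
move=> [_ Gs] Gc x y Gx Gy.
have H := Gc x y (/2) Gx Gy ltac:(lra) ltac:(lra).
have := Gs 2 _ ltac:(lra) H.
suff -> : vscale 2 (vadd (vscale (/2) x) (vscale (1 - /2) y)) = vadd x y by [].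
apply: vext => i; rewrite /vscale /vadd; field.
Qed.

Lemma cc_scale (G : vec n -> Prop) : is_cone G -> G vzero -> forall r x, 0 <= r -> G x -> G (vscale r x).
Proof.
move=> [_ Gs] G0 r x Hr Gx; case: (Rle_lt_or_eq_dec _ _ Hr) => Hr'.
- by apply: Gs.
- suff -> : vscale r x = vzero by [].
  by apply: vext => i; rewrite /vscale /vzero -Hr'; ring.
Qed.

Lemma cc_comb (G : vec n -> Prop) : is_cone G -> convex_set G -> G vzero ->
  forall m (c : 'I_m -> R) (v : 'I_m -> vec n), (forall k, 0 <= c k) -> (forall k, G (v k)) ->
  G (vsum (fun k => vscale (c k) (v k))).
Proof.
move=> Gcone Gconv G0 m c v Hc Hv; apply: vsum_cl.
  by split => //; apply: cc_add.
by move=> k; apply: cc_scale.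
Qed.

Variable K : vec n -> Prop.
Hypothesis HK : proper_cone K.

Lemma K0 : K vzero.
Proof. case: HK => [Kc [_ [_ [Kcl _]]]]; exact: cone_zero. Qed.

Lemma K_comb m (c : 'I_m -> R) (v : 'I_m -> vec n) : (forall k, 0 <= c k) -> (forall k, K (v k)) ->
  K (vsum (fun k => vscale (c k) (v k))).
Proof. case: HK => [Kc [Kconv _]]; apply: cc_comb => //; exact: K0. Qed.

Lemma K_add x y : K x -> K y -> K (vadd x y).
Proof. case: HK => [Kc [Kconv _]]; exact: cc_add. Qed.

Lemma K_scale r x : 0 <= r -> K x -> K (vscale r x).
Proof. case: HK => [Kc _]; apply: cc_scale => //; exact: K0. Qed.

Lemma face0 (F : vec n -> Prop) : is_face K F -> F vzero.
Proof.
move=> [[[x Fx] _] [_ [FK Ff]]]; apply: (Ff x) => //.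
- rewrite /coneLe (_ : vsub x vzero = x); first exact: FK.
  by apply: vext => i; rewrite /vsub /vzero; ring.
- rewrite /coneLe (_ : vsub vzero vzero = vzero); first exact: K0.
  by apply: vext => i; rewrite /vsub /vzero; ring.
Qed.

Lemma face_comb (F : vec n -> Prop) : is_face K F -> forall m (c : 'I_m -> R) (v : 'I_m -> vec n),
  (forall k, 0 <= c k) -> (forall k, F (v k)) -> F (vsum (fun k => vscale (c k) (v k))).
Proof. move=> HF; case: (HF) => [Fc [Fconv _]]; apply: cc_comb => //; exact: face0. Qed.

Lemma face_add (F : vec n -> Prop) : is_face K F -> forall x y, F x -> F y -> F (vadd x y).
Proof. move=> [Fc [Fconv _]]; exact: cc_add. Qed.

Lemma face_scale (F : vec n -> Prop) : is_face K F -> forall r x, 0 <= r -> F x -> F (vscale r x).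
Proof. move=> HF; case: (HF) => [Fc _]; apply: cc_scale => //; exact: face0. Qed.

Lemma face_split (F : vec n -> Prop) : is_face K F -> forall y z, F (vadd y z) -> K y -> K z -> F y.
Proof.
move=> [_ [_ [_ Ff]]] y z Fx Ky Kz; apply: (Ff (vadd y z)) => //.
- rewrite /coneLe (_ : vsub (vadd y z) y = z) //.
  by apply: vext => i; rewrite /vsub /vadd; ring.
- rewrite /coneLe (_ : vsub y vzero = y) //.
  by apply: vext => i; rewrite /vsub /vzero; ring.
Qed.

Lemma span_in (F : vec n -> Prop) x : F x -> span F x.
Proof.
move=> Fx; exists 1%nat; exists (fun _ => 1); exists (fun _ => x); split => //.
by apply: vext => i; rewrite /vsum big_ord1 /vscale; ring.
Qed.

Lemma span0 (F : vec n -> Prop) : span F vzero.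
Proof.
exists 0%nat; exists (fun _ => 0); exists (fun _ => vzero); split => [[]//|].
by apply: vext => i; rewrite /vsum big_ord0.
Qed.

Lemma span_add (F : vec n -> Prop) x y : span F x -> span F y -> span F (vadd x y).
Proof.
move=> [m1 [c1 [v1 [Hv1 ->]]]] [m2 [c2 [v2 [Hv2 ->]]]].
exists (m1 + m2)%nat;
exists (fun k => match fintype.split k with inl a => c1 a | inr b => c2 b end);
exists (fun k => match fintype.split k with inl a => v1 a | inr b => v2 b end).
split.
- by move=> k; case: (fintype.split k).
- apply: vext => i; rewrite /vsum /vadd /vscale big_split_ord /=.
  congr (_ + _); apply: eq_bigr => k _.
  + by have := unsplitK (inl k : 'I_m1 + 'I_m2) => /= ->.
  + by have := unsplitK (inr k : 'I_m1 + 'I_m2) => /= ->.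
Qed.

Lemma span_scale (F : vec n -> Prop) r x : span F x -> span F (vscale r x).
Proof.
move=> [m [c [v [Hv ->]]]]; exists m; exists (fun k => r * c k); exists v; split => //.
apply: vext => i; rewrite /vsum /vscale big_distrr /=.
by apply: eq_bigr => k _; ring.
Qed.

Lemma span_addcl (F : vec n -> Prop) : addcl (span F).
Proof. split; [exact: span0 | exact: span_add]. Qed.

Lemma span_comb (F : vec n -> Prop) m (c : 'I_m -> R) (v : 'I_m -> vec n) : (forall k, span F (v k)) ->
  span F (vsum (fun k => vscale (c k) (v k))).
Proof. move=> Hv; apply: vsum_cl; first exact: span_addcl. by move=> k; apply: span_scale. Qed.

Lemma Rmax_split c : Rmax c 0 - Rmax (- c) 0 = c.
Proof. rewrite /Rmax; case: Rle_dec; case: Rle_dec; lra. Qed.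

Lemma face_span (F : vec n -> Prop) : is_face K F -> forall y, K y -> span F y -> F y.
Proof.
move=> HF y Ky [m [c [v [Hv Hy]]]].
set p := vsum (fun k => vscale (Rmax (c k) 0) (v k)).
set q := vsum (fun k => vscale (Rmax (- c k) 0) (v k)).
have Hp : F p by apply: face_comb => // k; rewrite /Rmax; case: Rle_dec; lra.
have Hq : F q by apply: face_comb => // k; rewrite /Rmax; case: Rle_dec; lra.
have Hpq : p = vadd y q.
  apply: vext => i; rewrite Hy /p /q /vadd /vsum /vscale -big_split /=.
  apply: eq_bigr => k _; have E := Rmax_split (c k).
  have -> : Rmax (c k) 0 = c k + Rmax (- c k) 0 by lra.
  simpl; ring.
apply: (face_split HF (z := q)) => //; first by rewrite -Hpq.
by case: HF => [_ [_ [FK _]]]; apply: FK.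
Qed.

Lemma mv_add (A : mat n) x y : mv A (vadd x y) = vadd (mv A x) (mv A y).
Proof.
apply: vext => i; rewrite /mv /vadd -big_split /=.
by apply: eq_bigr => j _; ring.
Qed.

Lemma mv_scale (A : mat n) r x : mv A (vscale r x) = vscale r (mv A x).
Proof.
apply: vext => i; rewrite /mv /vscale big_distrr /=.
by apply: eq_bigr => j _; ring.
Qed.

Lemma mv_vsum (A : mat n) m (f : 'I_m -> vec n) : mv A (vsum f) = vsum (fun k => mv A (f k)).
Proof.
apply: vext => i; rewrite /mv /vsum.
rewrite (eq_bigr (fun j => \big[Rplus/0]_(k < m) (A i j * f k j))); last first.
  by move=> j _; rewrite big_distrr.
exact: exchange_big.
Qed.

Lemma mv_comb m (c : 'I_m -> R) (B : 'I_m -> mat n) x :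
  mv (fun i j => \big[Rplus/0]_(k < m) (c k * B k i j)) x =
  vsum (fun k => vscale (c k) (mv (B k) x)).
Proof.
apply: vext => i; rewrite /mv /vsum /vscale.
rewrite (eq_bigr (fun j => \big[Rplus/0]_(k < m) (c k * B k i j * x j))); last first.
  by move=> j _; rewrite big_distrl.
rewrite exchange_big /=; apply: eq_bigr => k _; rewrite big_distrr /=.
by apply: eq_bigr => j _; ring.
Qed.

Lemma span_inv (F : vec n -> Prop) (B : mat n) : (forall v, F v -> span F (mv B v)) ->
  forall y, span F y -> span F (mv B y).
Proof.
move=> H y [m [c [v [Hv ->]]]]; rewrite mv_vsum.
rewrite (_ : (fun k => mv B (vscale (c k) (v k))) = fun k => vscale (c k) (mv B (v k))).
  by apply: span_comb => k; apply: H.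
by apply: functional_extensionality => k; rewrite mv_scale.
Qed.

End Basic.
Section FinSpan.
Variable n : nat.
Variable M : mat n -> Prop.
Variable A0 : mat n.

Definition rv (A : mat n) : 'rV[R]_(n * n) := mxvec (\matrix_(i, j) A i j).
Definition Smx (s : seq (mat n)) : 'M[R]_(size s, n * n) :=
  \matrix_(k < size s) rv (nth A0 s k).

Lemma Smx_cons A s : (Smx s <= Smx (A :: s))%MS.
Proof.
apply/row_subP => i; rewrite /Smx rowK.
apply: (@eq_row_sub _ _ _ _ _ (lift ord0 i)).
by rewrite rowK lift0.
Qed.

Lemma Smx_head A s : (rv A <= Smx (A :: s))%MS.
Proof.
by apply: (@eq_row_sub _ _ _ _ _ ord0); rewrite /Smx rowK.
Qed.

Lemma fin_span_aux d : forall s, (forall k, M (nth A0 s k)) -> (0 < size s)%nat ->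
  (n * n - \rank (Smx s) <= d)%nat ->
  exists s', (forall k, M (nth A0 s' k)) /\ (0 < size s')%nat /\
    forall A, M A -> (rv A <= Smx s')%MS.
Proof.
elim: d => [|d IH] s Hs Hsz Hd;
  (case: (classic (forall A, M A -> (rv A <= Smx s)%MS)) => Hall;
   [by exists s | ]);
  (have [A [MA HA]] : exists A, M A /\ ~~ (rv A <= Smx s)%MS
    by apply: NNPP => H; apply: Hall => A MA; apply: NNPP => H2; apply: H; exists A; split => //; apply/negP);
  have Hlt : (\rank (Smx s) < \rank (Smx (A :: s)))%nat
    by apply: rank_ltmx; rewrite ltmxE Smx_cons /=; apply: contra HA => H;
       apply: submx_trans H; apply: Smx_head.
- have := rank_leq_col (Smx (A :: s)). move: Hd Hlt. lia.
- apply: (IH (A :: s)) => //.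
  + by move=> [|k] /=; [exact: MA | exact: Hs].
  + have := rank_leq_col (Smx (A :: s)). move: Hd Hlt. lia.
Qed.

End FinSpan.

Lemma fin_span n (M : mat n -> Prop) : (exists A, M A) ->
  exists m (B : 'I_m -> mat n), (0 < m)%nat /\ (forall k, M (B k)) /\
   forall A, M A -> exists c : 'I_m -> R,
     A = (fun i j => \big[Rplus/0]_(k < m) (c k * B k i j)).
Proof.
move=> [A0 MA0].
have [s [Hs [Hsz Hsp]]] := @fin_span_aux n M A0 (n * n) [:: A0]
  ltac:(by move=> [|[|k]]) erefl ltac:(by rewrite leq_subr).
exists (size s); exists (fun k => nth A0 s k); split => //; split => // A MA.
have /submxP [D HD] := Hsp A MA.
exists (fun k => D ord0 k).
apply: functional_extensionality => i; apply: functional_extensionality => j.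
have := congr1 (fun X : 'rV[R]_(n * n) => X ord0 (mxvec_index i j)) HD.
rewrite /= /rv mxvecE !mxE => ->.
apply: eq_bigr => k _; rewrite /Smx !mxE mxvecE mxE; done.
Qed.

Section Exp.
Variable n : nat.

Lemma big_le m (f g : 'I_m -> R) : (forall k, f k <= g k) ->
  \big[Rplus/0]_(k < m) f k <= \big[Rplus/0]_(k < m) g k.
Proof.
move=> H; apply: (big_ind2 (fun a b => a <= b)) => //; first lra.
move=> a b c d; lra.
Qed.

Lemma abs_big m (f : 'I_m -> R) :
  Rabs (\big[Rplus/0]_(k < m) f k) <= \big[Rplus/0]_(k < m) Rabs (f k).
Proof.
apply: (big_ind2 (fun a b => Rabs a <= b)) => //.
- rewrite Rabs_R0; lra.
- move=> a b c d H1 H2; have := Rabs_triang a c; lra.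
- move=> k _; lra.
Qed.

Definition matnorm (A : mat n) := \big[Rplus/0]_(i < n) \big[Rplus/0]_(j < n) Rabs (A i j).

Lemma matnorm_ge0 A : 0 <= matnorm A.
Proof. apply: sum_ge0 => i; apply: sum_ge0 => j; exact: Rabs_pos. Qed.

Lemma norm1_mv (A : mat n) y : norm1 (mv A y) <= matnorm A * norm1 y.
Proof.
rewrite /norm1 /matnorm big_distrl /=; apply: big_le => i.
rewrite /mv big_distrl /=.
apply: Rle_trans (abs_big _) _; apply: big_le => j.
rewrite Rabs_mult; apply: Rmult_le_compat_l; first exact: Rabs_pos.
exact: norm1_ge.
Qed.

Lemma iter_bound (A : mat n) x k :
  norm1 (iter k (mv A) x) <= matnorm A ^ k * norm1 x.
Proof.
elim: k => [|k IH] /=; first lra.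
apply: Rle_trans (norm1_mv _ _) _.
have := matnorm_ge0 A; nra.
Qed.

Definition shift (A : mat n) (mu : R) : mat n := fun i j => A i j + (if i == j then mu else 0).

Lemma mv_shift A mu y : mv (shift A mu) y = vadd (mv A y) (vscale mu y).
Proof.
apply: vext => i; rewrite /mv /shift /vadd /vscale.
rewrite (eq_bigr (fun j => A i j * y j + (if i == j then mu else 0) * y j)); last first.
  by move=> j _; ring.
rewrite big_split /=; congr (_ + _).
rewrite (bigD1 i) //= eqxx big1 /=; first ring.
by move=> j /negbTE; rewrite eq_sym => ->; ring.
Qed.


Lemma mv_sumf (A : mat n) (c : nat -> R) (Y : nat -> vec n) N :
  mv A (fun i => sum_f_R0 (fun j => c j * Y j i) N) =
  (fun i => sum_f_R0 (fun j => c j * mv A (Y j) i) N).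
Proof.
elim: N => [|N IH] /=.
- exact: (mv_scale A (c 0%nat) (Y 0%nat)).
- change (mv A (vadd (fun i => sum_f_R0 (fun j => c j * Y j i) N) (vscale (c (S N)) (Y (S N)))) =
    fun i => sum_f_R0 (fun j => c j * mv A (Y j) i) N + c (S N) * mv A (Y (S N)) i).
  by rewrite mv_add mv_scale IH.
Qed.

Lemma INR_addn a b : INR (addn a b) = INR a + INR b.
Proof. exact: plus_INR. Qed.

Lemma binom_iter (A : mat n) mu x k :
  iter k (mv (shift A mu)) x =
  (fun i => sum_f_R0 (fun j => (INR 'C(k, j) * mu ^ (k - j)) * iter j (mv A) x i) k).
Proof.
elim: k => [|k IH].
- by apply: vext => i /=; ring.
- rewrite [iter _ _ _]/= IH mv_shift mv_sumf.
  apply: vext => i; rewrite /vadd /vscale.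
  set Y := fun j => iter j (mv A) x.
  change (sum_f_R0 (fun j => INR 'C(k, j) * mu ^ (k - j) * Y (S j) i) k +
    mu * sum_f_R0 (fun j => INR 'C(k, j) * mu ^ (k - j) * Y j i) k =
    sum_f_R0 (fun j => INR 'C(k.+1, j) * mu ^ (k.+1 - j) * Y j i) (S k)).
  rewrite (decomp_sum _ (S k)) /=; last lia.
  rewrite (sum_eq (fun j => INR 'C(k.+1, j.+1) * mu ^ (k.+1 - j.+1) * Y j.+1 i)
     (fun j => INR 'C(k, j) * mu ^ (k - j) * Y (S j) i + INR 'C(k, j.+1) * mu ^ (k - j) * Y (S j) i));
    last by move=> j _; rewrite binS INR_addn subSS; ring.
  rewrite sum_plus scal_sum.
  set h := fun j => INR 'C(k, j) * mu ^ (k.+1 - j) * Y j i.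
  rewrite (sum_eq (fun j => INR 'C(k,j) * mu^(k-j) * Y j i * mu) h); last first.
    move=> j /leP Hj; rewrite /h subSn // /=; ring.
  have -> : sum_f_R0 h k = sum_f_R0 h (S k).
    by rewrite /= /h bin_small //= Rmult_0_l Rmult_0_l Rplus_0_r.
  rewrite (decomp_sum h (S k)) /=; last lia.
  rewrite /h bin0 subn0 /=.
  rewrite (sum_eq (fun i0 => INR 'C(k,i0.+1) * mu^(k.+1 - i0.+1) * mv A (Y i0) i)
    (fun l => INR 'C(k,l.+1) * mu^(k-l) * mv A (Y l) i)); last by move=> l _.
  ring.
Qed.

Lemma fact_ssr k : Factorial.fact k = k`!.
Proof. elim: k => //= k IH; rewrite factS IH. done. Qed.

Lemma INR_muln a b : INR (muln a b) = INR a * INR b.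
Proof. exact: mult_INR. Qed.

Lemma term_id (A : mat n) mu t x i j k : (j <= k)%nat ->
  t ^ j / INR (Factorial.fact j) * iter j (mv A) x i *
    ((mu * t) ^ (k - j) / INR (Factorial.fact (k - j))) =
  t ^ k / INR (Factorial.fact k) * (INR 'C(k, j) * mu ^ (k - j) * iter j (mv A) x i).
Proof.
move=> Hj.
have Hf : INR (Factorial.fact k) =
    INR 'C(k, j) * (INR (Factorial.fact j) * INR (Factorial.fact (k - j))).
  by rewrite -!INR_muln !fact_ssr bin_fact.
have Ht : t ^ k = t ^ j * t ^ (k - j) by rewrite -pow_add; congr pow; move: Hj; lia.
have HC : 0 < INR 'C(k, j) by apply: lt_0_INR; apply/ltP; rewrite bin_gt0.
have H1 := INR_fact_neq_0 j.
have H2 := INR_fact_neq_0 (k - j).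
rewrite Hf Ht Rpow_mult_distr; field; repeat split => //; lra.
Qed.

Lemma is_series_expo c : is_series (fun l => c ^ l / INR (Factorial.fact l)) (exp c).
Proof.
apply: is_series_ext (is_exp_Reals c) => k.
rewrite pow_n_pow /scal /= /mult /=; rewrite /Rdiv; ring.
Qed.

Lemma unif_N (P : 'I_n -> nat -> Prop) :
  (forall i, exists N, forall m, (N <= m)%nat -> P i m) -> exists N, forall i, P i N.
Proof.
move=> H.
suff [N HN] : exists N, forall i, i \in enum 'I_n -> forall m, (N <= m)%nat -> P i m.
  by exists N => i; apply: HN => //; rewrite mem_enum.
elim: (enum 'I_n) => [|a s [N HN]]; first by exists 0%nat.
have [Na Ha] := H a.
exists (maxn N Na) => i; rewrite inE => /orP [/eqP -> | Hi] m Hm.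
- by apply: Ha; apply: leq_trans Hm; rewrite leq_maxr.
- by apply: HN => //; apply: leq_trans Hm; rewrite leq_maxl.
Qed.

Lemma closed_lim (K : vec n -> Prop) : proper_cone K ->
  forall (S : nat -> vec n) z, (forall N, K (S N)) ->
  (forall i, Un_cv (fun N => S N i) (z i)) -> K z.
Proof.
move=> [_ [_ [_ [Kcl _]]]] S z KS Hcv; apply: Kcl => eps Heps.
have [N HN] : exists N, forall i, Rabs (z i - S N i) < eps.
  apply: (@unif_N (fun i m => Rabs (z i - S m i) < eps)) => i.
  have [N HN] := Hcv i eps Heps; exists N => m Hm.
  rewrite Rabs_minus_sym; apply: (HN m); apply/leP; exact: Hm.
by exists (S N); split.
Qed.

Lemma abs_term_bound (A : mat n) t x i j :
  Rabs (t ^ j / INR (Factorial.fact j) * iter j (mv A) x i) <=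
  (Rabs t * matnorm A) ^ j / INR (Factorial.fact j) * norm1 x.
Proof.
have HF : 0 < INR (Factorial.fact j) by apply: INR_fact_lt_0.
rewrite /Rdiv !Rabs_mult Rabs_inv (Rabs_pos_eq (INR _)); last lra.
rewrite -RPow_abs Rpow_mult_distr.
have Hb : Rabs (iter j (mv A) x i) <= matnorm A ^ j * norm1 x.
  apply: Rle_trans (norm1_ge _ i) (iter_bound _ _ _).
have H0 : 0 <= Rabs t ^ j * / INR (Factorial.fact j).
  apply: Rmult_le_pos; [apply: pow_le; exact: Rabs_pos | apply: Rlt_le; exact: Rinv_0_lt_compat].
have -> : Rabs t ^ j * matnorm A ^ j * / INR (Factorial.fact j) * norm1 x =
   (Rabs t ^ j * / INR (Factorial.fact j)) * (matnorm A ^ j * norm1 x) by ring.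
exact: Rmult_le_compat_l.
Qed.

Lemma expK (K : vec n -> Prop) : proper_cone K -> forall (A : mat n) mu,
  (forall x, K x -> K (vadd (mv A x) (vscale mu x))) -> exp_K_nonneg K A.
Proof.
move=> HK A mu HP t x y Ht Kx Hy.
set P := shift A mu.
have KP : forall k, K (iter k (mv P) x).
  by elim => //= k IH; rewrite mv_shift; apply: HP.
set z := fun i => y i * exp (mu * t).
have Hz : forall i, Un_cv (fun N => sum_f_R0
     (fun k => t ^ k / INR (Factorial.fact k) * iter k (mv P) x i) N) (z i).
  move=> i; apply/is_series_Reals.
  have H1 := @is_series_mult (fun j => t ^ j / INR (Factorial.fact j) * iter j (mv A) x i)
     (fun l => (mu * t) ^ l / INR (Factorial.fact l)) (y i) (exp (mu * t))
     (proj2 (is_series_Reals _ _) (Hy i)) (@is_series_expo (mu * t)).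
  have H2 : ex_series (fun j => Rabs (t ^ j / INR (Factorial.fact j) * iter j (mv A) x i)).
    apply: (@ex_series_le _ _ _ (fun j => (Rabs t * matnorm A) ^ j / INR (Factorial.fact j) * norm1 x)).
      move=> j; rewrite /norm /= /abs /= Rabs_Rabsolu; exact: abs_term_bound.
    apply: (ex_series_ext (fun j => scal (norm1 x) ((Rabs t * matnorm A) ^ j / INR (Factorial.fact j)))).
      by move=> j; rewrite /scal /= /mult /=; ring.
    apply: ex_series_scal; eexists; exact: is_series_expo.
  have H3 : ex_series (fun l => Rabs ((mu * t) ^ l / INR (Factorial.fact l))).
    apply: (ex_series_ext (fun l => Rabs (mu * t) ^ l / INR (Factorial.fact l))).
      move=> l; have HF : 0 < INR (Factorial.fact l) by apply: INR_fact_lt_0.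
      rewrite /Rdiv [Rabs (_ * / _)]Rabs_mult Rabs_inv (Rabs_pos_eq (INR _)); last lra.
      by rewrite RPow_abs.
    eexists; exact: is_series_expo.
  have H4 := H1 H2 H3.
  apply: (is_series_ext _ _ _ _ H4) => k.
  rewrite /P binom_iter scal_sum; apply: sum_eq => j /leP Hj.
  rewrite term_id //; ring.
have Kz : K z.
  apply: (closed_lim HK (S := fun N i => sum_f_R0
     (fun k => t ^ k / INR (Factorial.fact k) * iter k (mv P) x i) N)) => //.
  have Hc : forall k, 0 <= t ^ k / INR (Factorial.fact k).
    move=> k; apply: Rmult_le_pos; first exact: pow_le.
    apply: Rlt_le; apply: Rinv_0_lt_compat; exact: INR_fact_lt_0.
  elim => [|N IH].
  - exact: (K_scale HK (Hc 0%nat) (KP 0%nat)).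
  - exact: (K_add HK IH (K_scale HK (Hc (S N)) (KP (S N)))).
have -> : y = vscale (exp (- (mu * t))) z.
  apply: vext => i; rewrite /vscale /z.
  have E : exp (- (mu * t)) * exp (mu * t) = 1.
    by rewrite -exp_plus (_ : - (mu * t) + mu * t = 0) ?exp_0 //; ring.
  transitivity (y i * (exp (- (mu * t)) * exp (mu * t))); first by rewrite E; ring.
  ring.
apply: K_scale => //; apply: Rlt_le; exact: exp_pos.
Qed.

End Exp.
Lemma big_const_R m (c : R) : \big[Rplus/0]_(k < m) c = INR m * c.
Proof.
elim: m => [|m IH]; first by rewrite big_ord0 /=; ring.
rewrite big_ord_recr IH S_INR /=; ring.
Qed.

Section Main.
Variable n : nat.
Variable K : vec n -> Prop.
Hypothesis HK : proper_cone K.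

Lemma face_comb_split F : is_face K F -> forall m (c : 'I_m -> R) (v : 'I_m -> vec n),
  (forall k, 0 <= c k) -> (forall k, K (v k)) ->
  F (vsum (fun k => vscale (c k) (v k))) -> forall k, 0 < c k -> F (v k).
Proof.
move=> HF m c v Hc Hv HFs k Hk.
set r := vsum (fun j => vscale (if j == k then 0 else c j) (v j)).
have Hr : K r by apply: K_comb => // j; case: (j == k) => //; lra.
have E : vsum (fun k => vscale (c k) (v k)) = vadd (vscale (c k) (v k)) r.
  apply: vext => i; rewrite /r /vsum /vadd /vscale (bigD1 k) //= (bigD1 k (P := predT)) //= eqxx.
  rewrite Rmult_0_l Rplus_0_l; apply: Rplus_eq_compat_l.
  by apply: eq_bigr => j /negbTE ->.
rewrite E in HFs.
have H1 := face_split HF HFs (K_scale HK (Rlt_le _ _ Hk) (Hv k)) Hr.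
have := face_scale HK HF (r := / c k) (Rlt_le _ _ (Rinv_0_lt_compat _ Hk)) H1.
suff -> : vscale (/ c k) (vscale (c k) (v k)) = v k by [].
apply: vext => i; rewrite /vscale; field; lra.
Qed.

Lemma not_all_maps (M : mat n -> Prop) (G : vec n -> Prop) :
  ~ (exists A, M A /\ ~ maps_into A G) -> forall B, M B -> maps_into B G.
Proof. move=> H B MB; apply: NNPP => H2; apply: H; by exists B. Qed.

Lemma dir1 (M : mat n -> Prop) :
  (exists A, conv M A /\ K_irreducible K A) ->
  forall F, nontrivial_face K F -> exists A, M A /\ ~ maps_into A F.
Proof.
move=> [A [[m [w [B [Hw [Hsum [HB ->]]]]]] [_ Hirr]]] F HF.
apply: NNPP => H; apply: Hirr; exists F; split => // x Fx.
rewrite mv_comb; apply: (face_comb HK (proj1 HF)) => // k.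
exact: (not_all_maps H (HB k)).
Qed.

Lemma dir3 (M : mat n -> Prop) :
  (exists A, conv M A /\ irreducible_exp_K_nonneg K A) ->
  forall F, nontrivial_face K F -> exists A, M A /\ ~ maps_into A (span F).
Proof.
move=> [A [[m [w [B [Hw [Hsum [HB ->]]]]]] [_ Hirr]]] F HF.
apply: NNPP => H; apply: Hirr; exists F; split => // x Fx.
rewrite mv_comb; apply: span_comb => k.
exact: (not_all_maps H (HB k)).
Qed.

Lemma avg_conv (M : mat n -> Prop) m (B : 'I_m -> mat n) : (0 < m)%nat -> (forall k, M (B k)) ->
  conv M (fun i j => \big[Rplus/0]_(k < m) (/ INR m * B k i j)).
Proof.
move=> Hm HB; exists m; exists (fun _ => / INR m); exists B; split => [k|]; last split => //.
  apply: Rlt_le; apply: Rinv_0_lt_compat; apply: lt_0_INR; exact/ltP.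
rewrite big_const_R; field; apply: not_0_INR; move: Hm; lia.
Qed.

Lemma dir2 (M : mat n -> Prop) : (exists A, M A) -> (forall A, M A -> piK K A) ->
  (forall F, nontrivial_face K F -> exists A, M A /\ ~ maps_into A F) ->
  exists A, conv M A /\ K_irreducible K A.
Proof.
move=> HM0 HM Hfaces.
have [m [B [Hm [HBM Hlin]]]] := fin_span HM0.
have Hw : forall k : 'I_m, 0 < / INR m.
  move=> k; apply: Rinv_0_lt_compat; apply: lt_0_INR; exact/ltP.
exists (fun i j => \big[Rplus/0]_(k < m) (/ INR m * B k i j)); split; first exact: avg_conv.
split.
  move=> x Kx; rewrite mv_comb; apply: (K_comb HK) => k; [exact: Rlt_le (Hw k) | exact: HM (HBM k) x Kx].
move=> [F [HF HAF]].
have [B' [MB' HB']] := Hfaces F HF; apply: HB' => v Fv.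
have HBk : forall k, forall y, span F y -> span F (mv (B k) y).
  move=> k; apply: span_inv => u Fu; apply: span_in.
  have := HAF u Fu; rewrite mv_comb => H.
  apply: (face_comb_split (proj1 HF) _ _ H (Hw k)).
  - move=> j; exact: Rlt_le (Hw j).
  - move=> j; apply: (HM _ (HBM j)); case: HF => [[_ [_ [FK _]]] _]; exact: FK.
have [c Hc] := Hlin B' MB'.
have FK : forall y, F y -> K y by case: HF => [[_ [_ [FK _]]] _].
apply: (face_span HK (proj1 HF)); first exact: HM B' MB' v (FK v Fv).
rewrite Hc mv_comb; apply: span_comb => k; apply: HBk; exact: span_in.
Qed.

Lemma dir4 (M : mat n -> Prop) : (exists A, M A) -> (forall A, M A -> piK_plus_Lambda K A) ->
  (forall F, nontrivial_face K F -> exists A, M A /\ ~ maps_into A (span F)) ->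
  exists A, conv M A /\ irreducible_exp_K_nonneg K A.
Proof.
move=> HM0 HM Hfaces.
have [m [B [Hm [HBM Hlin]]]] := fin_span HM0.
have Hw : forall k : 'I_m, 0 < / INR m.
  move=> k; apply: Rinv_0_lt_compat; apply: lt_0_INR; exact/ltP.
have Hlam : forall k, exists l, forall x, K x -> K (vadd (mv (B k) x) (vscale (- l) x)).
  move=> k; have [C [l [HC HB]]] := HM _ (HBM k); exists l => x Kx.
  have -> : vadd (mv (B k) x) (vscale (- l) x) = mv C x.
    rewrite HB (_ : (fun i j => C i j + (if i == j then l else 0)) = shift C l) // mv_shift.
    by apply: vext => i; rewrite /vadd /vscale; ring.
  exact: HC.
pose lam := fun k => proj1_sig (constructive_indefinite_description _ (Hlam k)).
have Hl : forall k x, K x -> K (vadd (mv (B k) x) (vscale (- lam k) x)).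
  move=> k; exact: (proj2_sig (constructive_indefinite_description _ (Hlam k))).
pose A := fun i j => \big[Rplus/0]_(k < m) (/ INR m * B k i j).
pose L := \big[Rplus/0]_(k < m) (/ INR m * lam k).
have HD : forall x, vadd (mv A x) (vscale (- L) x) =
    vsum (fun k => vscale (/ INR m) (vadd (mv (B k) x) (vscale (- lam k) x))).
  move=> x; apply: vext => i; rewrite /A mv_comb /vsum /vadd /vscale.
  transitivity (\big[Rplus/0]_(k < m) (/ INR m * mv (B k) x i) +
     \big[Rplus/0]_(k < m) (/ INR m * (- lam k * x i))).
    apply: Rplus_eq_compat_l.
    rewrite (_ : - L * x i = L * (- x i)); last ring.
    rewrite /L big_distrl /=; apply: eq_bigr => k _; ring.
  rewrite -big_split; apply: eq_bigr => k _ /=; ring.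
have HDK : forall x, K x -> K (vadd (mv A x) (vscale (- L) x)).
  move=> x Kx; rewrite HD; apply: (K_comb HK) => k; [exact: Rlt_le (Hw k) | exact: Hl].
exists A; split; first exact: avg_conv.
split; first exact: (expK HK HDK).
move=> [F [HF HAF]].
have [B' [MB' HB']] := Hfaces F HF; apply: HB'.
have FK : forall y, F y -> K y by case: HF => [[_ [_ [FK _]]] _].
have HBk : forall k y, span F y -> span F (mv (B k) y).
  move=> k; apply: span_inv => u Fu.
  have HDu : F (vadd (mv A u) (vscale (- L) u)).
    apply: (face_span HK (proj1 HF)); first exact: HDK (FK u Fu).
    apply: span_add; first exact: HAF u (span_in Fu).
    apply: span_scale; exact: span_in.
  rewrite HD in HDu.
  have H1 := face_comb_split (proj1 HF) (fun j => Rlt_le _ _ (Hw j)) (fun j => Hl j u (FK u Fu)) HDu (Hw k).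
  rewrite (_ : mv (B k) u = vadd (vadd (mv (B k) u) (vscale (- lam k) u)) (vscale (lam k) u)).
    apply: span_add; first exact: span_in.
    apply: span_scale; exact: span_in.
  by apply: vext => i; rewrite /vadd /vscale; ring.
move=> y Hy; have [c Hc] := Hlin B' MB'.
rewrite Hc mv_comb; apply: span_comb => k; exact: HBk.
Qed.

End Main.

Theorem mainTheorem4 (n : nat) (K : vec n -> Prop) (HK : proper_cone K) :
  (forall M : mat n -> Prop,
     (exists A, M A) -> (forall A, M A -> piK K A) ->
     ((exists A, conv M A /\ K_irreducible K A) <->
      (forall F, nontrivial_face K F -> exists A, M A /\ ~ maps_into A F)))
  /\
  (forall M : mat n -> Prop,
     (exists A, M A) -> (forall A, M A -> piK_plus_Lambda K A) -> bounded_set M ->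
     ((exists A, conv M A /\ irreducible_exp_K_nonneg K A) <->
      (forall F, nontrivial_face K F -> exists A, M A /\ ~ maps_into A (span F)))).
Proof.
split => M HM0 HM.
- split; [exact: dir1 | exact: dir2].
- move=> _; split; [exact: dir3 | exact: dir4].
Qed.
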